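(* Let $K$ be a finite simplicial complex, $f$ an injective filtration function on $K$, $n$ a positive integer, and $\alpha$ an $n$-cycle whose class $[\alpha]\in H_n(K^f_a)$ is born at $a$ and terminated at a finite value $b>a$. Let $D=(0,\frac{b-a}{2}]$, let $\sigma_1,\ldots,\sigma_m$ be the $(n+1)$-simplices of $K$ and let $\Pi_\varepsilon$ ($\varepsilon\in D$) be as in the context. Suppose $t\in D$ is a point of discontinuity of $\varepsilon\mapsto\Pi_\varepsilon$ (i.e. $\Pi_\varepsilon$ is not constant on any neighbourhood of $t$ in $D$). Then there exist $i\neq j$ such that $2t=|f(\sigma_i)-f(\sigma_j)|$.
   Context: A filtration function on a finite simplicial complex $K$ is a map $f\colon K\to\mathbb{R}$ with $f(\sigma)\le f(\tau)$ whenever $\sigma$ is a face of $\tau$. Sublevel complexes are $K^f_r=f^{-1}((-\infty,r])$; homology is with coefficients in a fixed field. For a nontrivial class $[\alpha]\in H_n(K^f_r)$, its birth is the infimum of $q\le r$ such that $[\alpha]$ is in the image of $H_n(K^f_q)\to H_n(K^f_r)$, and its termination scale is the infimum of $q\ge r$ such that $[\alpha]$ maps to $0$ in $H_n(K^f_q)$. $\|f-g\|_\infty=\max_{\sigma\in K}|f(\sigma)-g(\sigma)|$. An injective $\varepsilon$-perturbation of $f$ is an injective filtration function $g$ with $\|f-g\|_\infty\le\varepsilon$. Each injective filtration function $g$ induces a linear ordering of the $(n+1)$-simplices $\{\sigma_1,\dots,\sigma_m\}$ by increasing $g$-value, regarded as a permutation in $S_m$; $\Pi_\varepsilon$ is the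 set of all permutations so induced by injective $\varepsilon$-perturbations of $f$. *)

(* Defs.v *)
From HB Require Import structures.
From mathcomp Require Import all_boot all_order all_algebra all_fingroup.
From mathcomp Require Import reals.
Set Implicit Arguments. Unset Strict Implicit. Unset Printing Implicit Defensive.
Import Order.TTheory GRing.Theory Num.Theory.
Local Open Scope ring_scope.

(* Abstract finite simplicial complex on vertex set 'I_N: a set of nonempty
   vertex sets, closed under taking nonempty subsets. A k-simplex has k+1 vertices. *)
Definition simplicial_complex (N : nat) (K : {set {set 'I_N}}) : Prop :=
  set0 \notin K /\
  forall s t : {set 'I_N}, s \in K -> t \subset s -> t != set0 -> t \in K.

Definition filtration (R : realType) (N : nat) (K : {set {set 'I_N}})
  (f : {set 'I_N} -> R) : Prop :=
  forall s t, s \in K -> t \in K -> s \subset t -> f s <= f t.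

Definition injective_on_K (R : realType) (N : nat) (K : {set {set 'I_N}})
  (f : {set 'I_N} -> R) : Prop :=
  forall s t, s \in K -> t \in K -> f s = f t -> s = t.

Definition sublevel (R : realType) (N : nat) (K : {set {set 'I_N}})
  (f : {set 'I_N} -> R) (r : R) : {set {set 'I_N}} :=
  [set s in K | f s <= r].

Definition is_chain (F : fieldType) (N : nat) (L : {set {set 'I_N}}) (k : nat)
  (c : {ffun {set 'I_N} -> F}) : Prop :=
  forall s, c s != 0 -> (s \in L) && (#|s| == k.+1).

(* oriented simplicial boundary, vertices ordered by their natural order:
   d[v_0..v_k] = sum_i (-1)^i [v_0..^v_i..v_k] *)
Definition boundary (F : fieldType) (N : nat) (c : {ffun {set 'I_N} -> F})
  : {ffun {set 'I_N} -> F} :=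
  [ffun t => \sum_(s : {set 'I_N})
      \sum_(v in s | s :\ v == t) (-1) ^+ #|[set u in s | (u < v)%N]| * c s].

Definition is_cycle (F : fieldType) (N : nat) (L : {set {set 'I_N}}) (k : nat)
  (c : {ffun {set 'I_N} -> F}) : Prop :=
  is_chain L k c /\ boundary c = 0.

Definition is_boundary (F : fieldType) (N : nat) (L : {set {set 'I_N}}) (k : nat)
  (c : {ffun {set 'I_N} -> F}) : Prop :=
  exists d, is_chain L k.+1 d /\ c = boundary d.

(* [alpha] in H_k(K_r) lies in the image of H_k(K_q) -> H_k(K_r)  (q <= r) *)
Definition in_image (F : fieldType) (R : realType) (N : nat) (K : {set {set 'I_N}})
  (f : {set 'I_N} -> R) (k : nat) (alpha : {ffun {set 'I_N} -> F}) (q r : R) : Prop :=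
  exists beta, is_cycle (sublevel K f q) k beta /\
    is_boundary (sublevel K f r) k (alpha - beta).

Definition maps_to_zero (F : fieldType) (R : realType) (N : nat) (K : {set {set 'I_N}})
  (f : {set 'I_N} -> R) (k : nat) (alpha : {ffun {set 'I_N} -> F}) (q : R) : Prop :=
  is_boundary (sublevel K f q) k alpha.

Definition birth (F : fieldType) (R : realType) (N : nat) (K : {set {set 'I_N}})
  (f : {set 'I_N} -> R) (k : nat) (alpha : {ffun {set 'I_N} -> F}) (r : R) : R :=
  reals.inf (fun q => q <= r /\ in_image K f k alpha q r).

Definition terminated_at (F : fieldType) (R : realType) (N : nat) (K : {set {set 'I_N}})
  (f : {set 'I_N} -> R) (k : nat) (alpha : {ffun {set 'I_N} -> F}) (r b : R) : Prop :=
  (exists q, r <= q /\ maps_to_zero K f k alpha q) /\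
  b = reals.inf (fun q => r <= q /\ maps_to_zero K f k alpha q).

Definition inj_perturbation (R : realType) (N : nat) (K : {set {set 'I_N}})
  (f g : {set 'I_N} -> R) (eps : R) : Prop :=
  filtration K g /\ injective_on_K K g /\
  forall s, s \in K -> `|f s - g s| <= eps.

(* the permutation pi in S_m is the ordering of sigma_1..sigma_m by increasing g:
   pi i is the index of the i-th smallest (n+1)-simplex *)
Definition induced_perm (R : realType) (N m : nat) (sigma : 'I_m -> {set 'I_N})
  (g : {set 'I_N} -> R) (pi : 'S_m) : Prop :=
  forall i j : 'I_m, (i < j)%N -> g (sigma (pi i)) < g (sigma (pi j)).

Definition Pi_eps (R : realType) (N m : nat) (K : {set {set 'I_N}})
  (f : {set 'I_N} -> R) (sigma : 'I_m -> {set 'I_N}) (eps : R) (pi : 'S_m) : Prop :=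
  exists g, inj_perturbation K f g eps /\ induced_perm sigma g pi.

(* Main.v *)
Require Import Defs.
From HB Require Import structures.
From mathcomp Require Import all_boot all_order all_algebra all_fingroup.
From mathcomp Require Import reals.
From mathcomp Require Import lra.
Import Order.TTheory GRing.Theory Num.Theory.
Local Open Scope ring_scope.

Section Helpers.
Variable R : realType.

Lemma small_seq (l : seq R) : (forall x, x \in l -> 0 < x) ->
  exists c : R, 0 < c /\ forall x, x \in l -> c <= x.
Proof.
elim: l => [|y l IH] H.
  by exists 1; split => // x.
have [c [c0 Hc]] : exists c : R, 0 < c /\ forall x, x \in l -> c <= x.
  by apply: IH => x xl; apply: H; rewrite inE xl orbT.
have y0 : 0 < y by apply: H; rewrite inE eqxx.
exists (Num.min c y); split; first by rewrite lt_min c0 y0.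
move=> x; rewrite inE => /orP [/eqP -> | xl]; first by rewrite ge_min lexx orbT.
by rewrite ge_min Hc.
Qed.

Lemma small_fin (I : finType) (F : I -> R) : (forall i, 0 < F i) ->
  exists c : R, 0 < c /\ forall i, c <= F i.
Proof.
move=> H; have [|c [c0 Hc]] := @small_seq [seq F i | i <- enum I].
  by move=> x /mapP [i _ ->].
by exists c; split => // i; apply: Hc; apply: map_f; rewrite mem_enum.
Qed.

Lemma avoid_seq (l : seq R) (c : R) : 0 < c -> exists t : R, [/\ 0 < t, t < c & t \notin l].
Proof.
elim: l c => [|y l IH] c c0.
  by exists (c / 2); split => //; lra.
have [y0 | yc] := ltP 0 y; last first.
  have [t [t0 tc tl]] := IH c c0.
  exists t; split => //; rewrite inE negb_or tl andbT; apply/eqP => ty; lra.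
have [cy | yc] := leP c y.
  have [t [t0 tc tl]] := IH c c0.
  exists t; split => //; rewrite inE negb_or tl andbT; apply/eqP => ty; lra.
have [t [t0 tc tl]] := IH y y0.
exists t; split => //; first lra.
rewrite inE negb_or tl andbT; apply/eqP => ty; lra.
Qed.

Variables (F : nat -> R) (e k : R).

Fixpoint Xs (p : nat) : R :=
  if p is p'.+1 then Num.max (Xs p' + k) (F p - e) else F 0 - e.

Lemma Xs_lb p : F p - e <= Xs p.
Proof. by case: p => [|p] //=; rewrite le_max lexx orbT. Qed.


Lemma Xs_mono (k0 : 0 < k) p q : (p < q)%N -> Xs p < Xs q.
Proof.
elim: q => [//|q IH]; rewrite ltnS leq_eqVlt => /orP [/eqP -> | pq].
  by rewrite /= lt_max; apply/orP; left; lra.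
apply: (lt_trans (IH pq)); rewrite /= lt_max; apply/orP; left; lra.
Qed.

Variable M : nat.
Variable e0 : 0 <= e.
Variable HF : forall p q, (p < q)%N -> (q < M)%N ->
  F p - F q + q%:R * k <= 2 * e + p%:R * k.

Lemma Xs_ub_gen p q : (p <= q)%N -> (q < M)%N ->
  Xs p + q%:R * k <= F q + e + p%:R * k.
Proof.
have e0' := e0.
elim: p q => [|p IH] q pq qM /=.
  case: q pq qM => [|q] _ qM; first by rewrite mul0r; lra.
  by have := HF _ _ (ltn0Sn q) qM; rewrite mul0r; lra.
have Ep : (p.+1)%:R = p%:R + 1 :> R by rewrite -natr1.
rewrite Ep.
have := IH q (ltnW pq) qM.
set A := Xs p.
move=> H1.
have H2 : F p.+1 - e + q%:R * k <= F q + e + (p%:R + 1) * k.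
  move: pq; rewrite leq_eqVlt => /orP [/eqP <- | pq].
    by rewrite Ep; lra.
  have := HF _ _ pq qM; rewrite Ep; lra.
have [h|h] := leP (A + k) (F p.+1 - e).
  by lra.
by lra.
Qed.

Lemma Xs_ub q : (q < M)%N -> Xs q <= F q + e.
Proof. by move=> qM; have := Xs_ub_gen q q (leqnn q) qM; rewrite -/(Xs q); lra. Qed.

End Helpers.
Arguments small_fin {R I}.
Arguments avoid_seq {R}.
Arguments Xs {R}.
Arguments Xs_lb {R}.

Lemma suff_perm (R : realType) (N : nat) (K : {set {set 'I_N}}) (f : {set 'I_N} -> R)
  (Hf : filtration K f) (Hfinj : injective_on_K K f) (n m : nat)
  (sigma : 'I_m -> {set 'I_N}) (Hsinj : injective sigma)
  (Hsig : forall s, (s \in K) && (#|s| == n.+2) <-> exists i, sigma i = s)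
  (e : R) (He : 0 < e) (pi : 'S_m)
  (C : forall i j : 'I_m, (i < j)%N -> f (sigma (pi i)) - f (sigma (pi j)) < 2 * e) :
  Pi_eps K f sigma e pi.
Proof.
pose F p := nth 0 [seq f (sigma (pi i)) | i <- enum 'I_m] p.
have FE : forall i : 'I_m, F i = f (sigma (pi i)).
  by move=> i; rewrite /F (nth_map i) ?size_enum_ord ?ltn_ord // nth_ord_enum.
have [|k [k0 Hk]] := small_fin (fun ij : 'I_m * 'I_m => if (ij.1 < ij.2)%N
     then (2 * e - (F ij.1 - F ij.2)) / m%:R else 1).
  move=> [i j] /=; case: ifP => // ij; apply: divr_gt0.
    by have := C i j ij; rewrite !FE; lra.
  by rewrite ltr0n; exact: (leq_ltn_trans (leq0n _) (ltn_ord j)).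
have HF : forall p q, (p < q)%N -> (q < m)%N ->
    F p - F q + q%:R * k <= 2 * e + p%:R * k.
  move=> p q pq qm; have pm : (p < m)%N := ltn_trans pq qm.
  have := Hk (Ordinal pm, Ordinal qm); rewrite /= pq ler_pdivlMr; last first.
    by rewrite ltr0n; exact: (leq_ltn_trans (leq0n _) qm).
  move=> H.
  have h1 : (q%:R <= m%:R :> R) by rewrite ler_nat ltnW.
  have h2 : (0 <= p%:R :> R) by rewrite ler0n.
  nra.
pose X := Xs F e k.
pose B (s : {set 'I_N}) := if (#|s| < n.+2)%N then f s - e else if (n.+2 < #|s|)%N then f s + e
   else (if [pick p : 'I_m | sigma (pi p) == s] is Some p then X p else f s).
have BS : forall p : 'I_m, B (sigma (pi p)) = X p.
  move=> p; have /andP [_ /eqP cs] := proj2 (Hsig (sigma (pi p))) (ex_intro _ (pi p) erefl).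
  rewrite /B cs ltnn; case: pickP => [p' /eqP /Hsinj /perm_inj -> // | /(_ p)].
  by rewrite eqxx.
have XF : forall p : 'I_m, `|X p - F p| <= e.
  move=> p; rewrite ler_norml; have := Xs_lb F e k p.
  have := @Xs_ub _ F e k m (ltW He) HF p (ltn_ord p).
  rewrite -/X => ??; apply/andP; split; lra.
have B1 : forall s, `|B s - f s| <= e.
  move=> s; rewrite /B; case: ifP => _.
    by rewrite ler_norml; apply/andP; split; lra.
  case: ifP => _.
    by rewrite ler_norml; apply/andP; split; lra.
  case: pickP => [p /eqP <- | _]; first by rewrite -FE; exact: XF.
  by rewrite subrr normr0 ltW.
have B2 : forall s u, s \in K -> u \in K -> s \subset u -> B s <= B u.
  move=> s u sK uK su.
  have hu := B1 u; have hs := B1 s; have fsu := Hf s u sK uK su.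
  rewrite !ler_norml in hu hs; move/andP: hu => [hu1 hu2]; move/andP: hs => [hs1 hs2].
  have [<-|ne] := eqVneq s u; first exact: lexx.
  have lt : (#|s| < #|u|)%N.
    rewrite ltn_neqAle subset_leq_card // andbT; apply: contra ne => /eqP c.
    by rewrite eqEcard su c leqnn.
  case: (ltnP #|s| n.+2) => hs3.
    rewrite [B s]/B hs3; lra.
  case: (ltnP n.+2 #|u|) => hu3.
    have nu : (#|u| < n.+2)%N = false by rewrite ltnNge ltnW.
    rewrite [B u]/B nu hu3; lra.
  by move: (leq_trans lt hu3); rewrite ltnNge hs3.
have B3 : forall i j : 'I_m, (i < j)%N -> B (sigma (pi i)) < B (sigma (pi j)).
  by move=> i j ij; rewrite !BS; exact: Xs_mono.
have [|c [c0 Hc]] := small_fin (fun ij : 'I_m * 'I_m => if (ij.1 < ij.2)%N then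
   (B (sigma (pi ij.2)) - B (sigma (pi ij.1))) /
   ((B (sigma (pi ij.2)) - B (sigma (pi ij.1))) +
     `|f (sigma (pi ij.2)) - f (sigma (pi ij.1))|) else 1).
  move=> [i j] /=; case: ifP => // ij; have h := B3 i j ij.
  have := normr_ge0 (f (sigma (pi j)) - f (sigma (pi i))).
  move=> h'; apply: divr_gt0; lra.
pose bad := [seq (B p.1 - B p.2) / ((B p.1 - B p.2) - (f p.1 - f p.2))
   | p <- enum {: {set 'I_N} * {set 'I_N}}].
have [t [t0 tc tbad]] : exists t : R, [/\ 0 < t, t < Num.min c 1 & t \notin bad].
  by apply: avoid_seq; rewrite lt_min c0 ltr01.
move: tc; rewrite lt_min => /andP [tc t1].
exists (fun s => (1 - t) * B s + t * f s); split; [split; [|split] |].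
- move=> s u sK uK su /=.
  have := B2 s u sK uK su; have := Hf s u sK uK su; nra.
- move=> s u sK uK /= eq; apply/eqP; apply: contraT => ne.
  have fne : f s - f u != 0.
    rewrite subr_eq0; apply: contra ne => /eqP /(Hfinj s u sK uK) ->; exact: eqxx.
  have key : B s - B u = t * ((B s - B u) - (f s - f u)) by nra.
  have den : (B s - B u) - (f s - f u) != 0.
    apply/eqP => h; rewrite h mulr0 in key.
    have h0 : f s - f u = 0 by lra.
    by rewrite h0 eqxx in fne.
  have tE : t = (B s - B u) / ((B s - B u) - (f s - f u)) by rewrite {1}key mulfK.
  have : t \in bad by rewrite tE; apply/mapP; exists (s, u); rewrite ?mem_enum.
  by rewrite (negbTE tbad).
- move=> s sK /=; have := B1 s; rewrite !ler_norml => /andP [h1 h2].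
  apply/andP; split; nra.
- move=> i j ij /=; have := Hc (i, j); rewrite /= ij.
  have h := B3 i j ij.
  have hn := normr_ge0 (f (sigma (pi j)) - f (sigma (pi i))).
  rewrite ler_pdivlMr; last lra.
  have := ler_norm (f (sigma (pi j)) - f (sigma (pi i))).
  have : - `|f (sigma (pi j)) - f (sigma (pi i))| <= f (sigma (pi j)) - f (sigma (pi i)).
    by have := lexx `|f (sigma (pi j)) - f (sigma (pi i))|; rewrite ler_norml => /andP [].
  nra.
Qed.

Lemma nec_perm (R : realType) (N : nat) (K : {set {set 'I_N}}) (f : {set 'I_N} -> R)
  (n m : nat) (sigma : 'I_m -> {set 'I_N})
  (Hsig : forall s, (s \in K) && (#|s| == n.+2) <-> exists i, sigma i = s)
  (e : R) (pi : 'S_m) :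
  Pi_eps K f sigma e pi ->
  forall i j : 'I_m, (i < j)%N -> f (sigma (pi i)) - f (sigma (pi j)) < 2 * e.
Proof.
move=> [g [[_ [_ Hg]] Hind]] i j ij.
have /andP [aK _] := proj2 (Hsig (sigma (pi i))) (ex_intro _ (pi i) erefl).
have /andP [bK _] := proj2 (Hsig (sigma (pi j))) (ex_intro _ (pi j) erefl).
have := Hg _ aK; have := Hg _ bK; have := Hind i j ij.
rewrite !ler_norml => ? /andP [? ?] /andP [? ?]; lra.
Qed.

Lemma thr (R : realType) (t eps x d : R) : 0 < t -> 0 < eps ->
  d <= `|2 * t - `|x| | -> `|eps - t| < d / 2 -> (x < 2 * eps) = (x < 2 * t).
Proof.
move=> t0 e0 hd; rewrite ltr_norml => /andP [h1 h2].
have [x0|x0] := lerP 0 x.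
  rewrite (ger0_norm x0) in hd; move: hd; rewrite ler_normr => /orP [] hd;
  by apply/idP/idP => ?; lra.
by apply/idP/idP => ?; lra.
Qed.

Theorem lemma3p2 (F : fieldType) (R : realType) (N : nat)
  (K : {set {set 'I_N}}) (HK : simplicial_complex K)
  (f : {set 'I_N} -> R) (Hf : filtration K f) (Hfinj : injective_on_K K f)
  (n : nat) (Hn : (0 < n)%N)
  (alpha : {ffun {set 'I_N} -> F}) (a b : R)
  (Hcyc : is_cycle (sublevel K f a) n alpha)
  (Hnontriv : ~ is_boundary (sublevel K f a) n alpha)
  (Hbirth : birth K f n alpha a = a)
  (Hterm : terminated_at K f n alpha a b)
  (Hab : a < b)
  (m : nat) (sigma : 'I_m -> {set 'I_N}) (Hsinj : injective sigma)
  (Hsig : forall s, (s \in K) && (#|s| == n.+2) <-> exists i, sigma i = s)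
  (t : R) (Ht : 0 < t /\ t <= (b - a) / 2)
  (Hdisc : forall delta : R, 0 < delta ->
     exists eps : R, [/\ 0 < eps, eps <= (b - a) / 2, `|eps - t| < delta &
       ~ (forall pi : 'S_m, Pi_eps K f sigma eps pi <-> Pi_eps K f sigma t pi)]) :
  exists i j : 'I_m, i != j /\ 2 * t = `|f (sigma i) - f (sigma j)|.
Proof.
case: Ht => t0 _.
case: (boolP [exists i : 'I_m, exists j : 'I_m,
   (i != j) && (2 * t == `|f (sigma i) - f (sigma j)|)]).
  by move/existsP => [i /existsP [j /andP [ij /eqP E]]]; exists i, j.
move=> Hno; exfalso.
have Hne : forall ij : 'I_m * 'I_m,
    0 < `|2 * t - `|f (sigma ij.1) - f (sigma ij.2)| |.
  move=> [i j] /=; rewrite normr_gt0 subr_eq0; apply/negP => /eqP E.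
  have [ij|ij] := eqVneq i j.
    by move: E; rewrite ij subrr normr0 => E; lra.
  apply: (negP Hno); apply/existsP; exists i; apply/existsP; exists j.
  by rewrite ij E eqxx.
have [d [d0 Hd]] := small_fin _ Hne.
have d2 : 0 < d / 2 by lra.
have [eps [e0 _ close nI]] := Hdisc (d / 2) d2.
apply: nI => pi.
have Ceq : forall i j : 'I_m,
   (f (sigma (pi i)) - f (sigma (pi j)) < 2 * eps) =
   (f (sigma (pi i)) - f (sigma (pi j)) < 2 * t).
  by move=> i j; apply: (@thr R t eps _ d t0 e0 (Hd (pi i, pi j)) close).
split => H.
  apply: (@suff_perm R N K f Hf Hfinj n m sigma Hsinj Hsig t t0) => i j ij.
  by rewrite -Ceq; exact: (@nec_perm R N K f n m sigma Hsig _ pi H).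
apply: (@suff_perm R N K f Hf Hfinj n m sigma Hsinj Hsig eps e0) => i j ij.
by rewrite Ceq; exact: (@nec_perm R N K f n m sigma Hsig _ pi H).
Qed.
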